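(* Let $K\ge 3$ be odd, $a,b\ge1$ integers, $M\ge0$. For the $(K,a,b)$ coded caching problem for location-based content, $R^\star\ge \dfrac{K-1}{2}-\dfrac{K-1}{2(2a+b)}M$.
   Context: For integers $x\le y$, $[x:y]=\{x,x+1,\dots,y\}$ and $[n]=[1:n]$. For integers $c$ and $m\ge1$, $\langle c\rangle_m$ denotes the unique element of $\{1,\dots,m\}$ congruent to $c$ modulo $m$. The $(K,a,b)$ coded caching problem for location-based content: a server has $N=K(a+b)$ files $W_1,\dots,W_N$, each consisting of $B$ independent uniformly distributed bits. There are $K$ cache nodes, each storing $MB$ bits, and $K$ users, user $k$ having free access to cache node $k$ only. For $k\in[K]$ define $\mathcal D_{k,1}=[(k-1)(a+b)+1:ka+(k-1)b]$, $\mathcal D_{k,2}=[ka+(k-1)b+1:k(a+b)]$, $\mathcal D_{k,3}=\mathcal D_{\langle k+1\rangle_K,1}$, and $\mathcal D_k=\mathcal D_{k,1}\cup\mathcal D_{k,2}\cup\mathcal D_{k,3}$. A scheme consists of: placement functions $Z_k=\phi_k(W_1,\dots,W_N)\in\{0,1\}^{MB}$, chosen without knowledge of demands; for every demand vector $\mathbf d=(d_1,\dots,d_K)\in\mathcal D_1\times\cdots\times\mathcal D_K$, a transmitted message $X=\psi(\mathbf d,W_1,\dots,W_N)\in\{0,1\}^{RB}$; and decoding functions such that user $k$ recovers $W_{d_k}$ exactly from $(\mathbf d,Z_k,X)$ for every $\mathbf d$ and $k$. $R$ is the worst-case load and $R^\star$ is the infimum of $R$ over all schemes (and all $B$). *)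

(* Defs.v *)
From HB Require Import structures.
From mathcomp Require Import all_boot all_order all_algebra.
From mathcomp Require Import reals.
Set Implicit Arguments. Unset Strict Implicit. Unset Printing Implicit Defensive.
Import Order.TTheory GRing.Theory Num.Theory.

(* <c>_m : the unique element of {1..m} congruent to c mod m (for c >= 1). *)
Definition angle (c m : nat) : nat := (c.-1 %% m).+1.

(* File index sets, with 1-based file indices j and 1-based cache index k. *)
Definition inD1 (K a b k j : nat) : bool :=
  ((k - 1) * (a + b) + 1 <= j) && (j <= k * a + (k - 1) * b).
Definition inD2 (K a b k j : nat) : bool :=
  (k * a + (k - 1) * b + 1 <= j) && (j <= k * (a + b)).
Definition inD3 (K a b k j : nat) : bool := inD1 K a b (angle k.+1 K) j.
Definition inD (K a b k j : nat) : bool :=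
  [|| inD1 K a b k j, inD2 K a b k j | inD3 K a b k j].

Definition bits (n : nat) := {ffun 'I_n -> bool}.

(* Library of N = K(a+b) files W_1..W_N (file j+1 is index j : 'I_N). *)
Definition library (K a b B : nat) := {ffun 'I_(K * (a + b)) -> bits B}.

(* Demand vector: user k+1 (index k : 'I_K) requests file (d k)+1. *)
Definition demand (K a b : nat) := 'I_K -> 'I_(K * (a + b)).

Definition valid_demand (K a b : nat) (d : demand K a b) : Prop :=
  forall k : 'I_K, inD K a b k.+1 (d k).+1.

(* A scheme with subpacketization B, caches of m = M B bits and a
   transmission of r = R B bits; user k decodes from (d, Z_k, X). *)
Record scheme (K a b B m r : nat) := Scheme {
  place : 'I_K -> library K a b B -> bits m;
  send : demand K a b -> library K a b B -> bits r;
  decode : 'I_K -> demand K a b -> bits m -> bits r -> bits B;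
  correct : forall d : demand K a b, valid_demand d ->
    forall (W : library K a b B) (k : 'I_K),
      decode k d (place k W) (send d W) = W (d k)
}.

(* Main.v *)
Require Import Defs.
From HB Require Import structures.
From mathcomp Require Import all_boot all_order all_algebra.
From mathcomp Require Import reals.
From mathcomp Require Import zify ring lra.
Import Order.TTheory GRing.Theory Num.Theory.
Import Order.TTheory GRing.Theory Num.Theory.

Set Bullet Behavior "Strict Subproofs".
Section Comb.
Variables (K a b B m r t : nat).
Hypothesis Ht : K = (2 * t + 1)%N.
Hypothesis Ha : (1 <= a)%N.
Variable S : scheme K a b B m r.

Local Notation c := (2 * a + b)%N.

Definition dv (j : 'I_c) (k : 'I_K) : nat :=
  if (k.+1 < K)%N then (k * (a + b) + j)%N else (k * (a + b))%N.

Lemma dv_lt j k : (dv j k < K * (a + b))%N.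
Proof.
rewrite /dv; have := ltn_ord j; have := ltn_ord k; 
case: ifP => H1 H2 H3.
- have : ((k + 2) * (a + b) <= K * (a + b))%N by apply: leq_mul; lia.
  nia.
- have : ((k + 1) * (a + b) <= K * (a + b))%N by apply: leq_mul; lia.
  nia.
Qed.

Definition dmd (j : 'I_c) : demand K a b := fun k => Ordinal (dv_lt j k).

Lemma dmd_valid j : valid_demand (dmd j).
Proof.
move=> k; rewrite /inD /inD1 /inD2 /inD3 /angle /= /dv.
have := ltn_ord j; have := ltn_ord k; 
case: ifP => H1 H2 H3.
- rewrite /= modn_small //.
  have E1 : ((k.+1) * a = k * a + a)%N by rewrite mulSn addnC.
  have E2 : ((k.+1) * b = k * b + b)%N by rewrite mulSn addnC.
  have E3 : ((k.+2) * a = k * a + a + a)%N by rewrite !mulSn; lia.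
  rewrite !subn1 /= !mulnDr E1 E2 ?E3.
  rewrite /inD1 !subn1 /= !mulnDr E3 E1 E2.
  case: (ltnP j a) => hj.
  + apply/orP; left; apply/andP; split; lia.
  + case: (ltnP j (a + b)) => hj2.
    * apply/orP; right; apply/orP; left; apply/andP; split; lia.
    * apply/orP; right; apply/orP; right; apply/andP; split; lia.
- have E1 : ((k.+1) * a = k * a + a)%N by rewrite mulSn addnC.
  rewrite !subn1 /= !mulnDr E1.
  apply/orP; left; apply/andP; split; lia.
Qed.

Lemma cache_lt (i : 'I_t) : (2 * i < K)%N.
Proof. have := ltn_ord i; lia. Qed.
Definition cache (i : 'I_t) : 'I_K := Ordinal (cache_lt i).

Lemma file_lt (i : 'I_t) (j : 'I_c) : (i * (2 * (a + b)) + j < K * (a + b))%N.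
Proof.
have := ltn_ord i; have := ltn_ord j => H1 H2.
have : ((i + 1) * (2 * (a + b)) <= t * (2 * (a+b)))%N by apply: leq_mul; lia.
nia.
Qed.
Definition file i j : 'I_(K * (a + b)) := Ordinal (file_lt i j).

Lemma dmd_cache i j : dmd j (cache i) = file i j.
Proof.
apply: val_inj; rewrite /= /dv /=.
have := ltn_ord i => Hi.
have -> : ((2 * i).+1 < K)%N by lia.
rewrite mulnA; lia.
Qed.

Definition zeroB : bits B := [ffun _ => false].

Definition lib (w : {ffun 'I_t * 'I_c -> bits B}) : library K a b B :=
  [ffun n : 'I_(K * (a + b)) =>
    match (insub (n %/ (2 * (a + b)))%N : option 'I_t),
          (insub (n %% (2 * (a + b)))%N : option 'I_c) with
    | Some i, Some j => w (i, j)
    | _, _ => zeroB end].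

Lemma lib_file w i j : lib w (file i j) = w (i, j).
Proof.
rewrite /lib ffunE /=.
have Hj : (j < 2 * (a + b))%N by have := ltn_ord j;   lia.
rewrite divnMDl; last lia.
rewrite modnMDl (divn_small Hj) addn0 (modn_small Hj).
rewrite !insubT /=; [exact: ltn_ord | exact: ltn_ord |]. move=> H0 H1; congr (w (_, _)); exact: val_inj.
Qed.

Definition F (w : {ffun 'I_t * 'I_c -> bits B}) :
  {ffun 'I_t -> bits m} * {ffun 'I_c -> bits r} :=
  ([ffun i => place S (cache i) (lib w)], [ffun j => send S (dmd j) (lib w)]).

Lemma F_inj : injective F.
Proof.
move=> w1 w2 [] /ffunP H1 /ffunP H2.
apply/ffunP => -[i j].
rewrite -!lib_file -!dmd_cache.
rewrite -!(correct S (dmd_valid j)).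
have := H1 i; have := H2 j; rewrite !ffunE => -> -> //.
Qed.

Lemma card_bits n : #|bits n| = (2 ^ n)%N.
Proof. by rewrite card_ffun card_bool card_ord. Qed.

Lemma cutset : (B * (t * c) <= m * t + r * c)%N.
Proof.
have := leq_card F F_inj.
rewrite card_prod !card_ffun card_prod !card_ord card_bool -!expnM -expnD.
by rewrite leq_exp2l.
Qed.
End Comb.

Local Open Scope ring_scope.

Theorem mainTheorem5 (R : realType) (K a b : nat) :
  (3 <= K)%N -> odd K -> (1 <= a)%N -> (1 <= b)%N ->
  forall M : R, 0 <= M ->
  forall (B m r : nat), (0 < B)%N -> m%:R = M * B%:R ->
  forall S : scheme K a b B m r,
    (K%:R - 1) / 2 - (K%:R - 1) / (2 * (2 * a%:R + b%:R)) * M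
      <= r%:R / B%:R.
Proof.
move=> HK oK Ha Hb M HM B m r HB Hm S.
set t := K./2.
have Ht : K = (2 * t + 1)%N.
  by have := odd_double_half K; rewrite oK -muln2; lia.
have Hc := @cutset K a b B m r t Ht Ha S.
have Hc' : ((B * (t * (2 * a + b)))%:R <= (m * t + r * (2 * a + b))%:R :> R).
  by rewrite ler_nat.
rewrite !natrD !natrM in Hc'.
have BR : (0 < B%:R :> R) by rewrite ltr0n.
have cR : (0 < 2 * a%:R + b%:R :> R).
  have : (0 < a%:R :> R) by rewrite ltr0n.
  have : (0 <= b%:R :> R) by [].
  lra.
have HM' : M = m%:R / B%:R by rewrite Hm mulfK // gt_eqF.
rewrite HM' Ht natrD natrM.
rewrite -subr_ge0.
set tR := (t%:R : R). set aR := (a%:R : R). set bR := (b%:R : R).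
set BR' := (B%:R : R). set mR := (m%:R : R). set rR := (r%:R : R).
have -> : rR / BR' - ((2%:R * tR + 1%:R - 1) / 2 - (2%:R * tR + 1%:R - 1) / (2 * (2 * aR + bR)) * (mR / BR'))
   = (mR * tR + rR * (2 * aR + bR) - BR' * (tR * (2 * aR + bR))) / ((2 * aR + bR) * BR').
  field. by rewrite !gt_eqF.
apply: divr_ge0; last by apply: mulr_ge0; lra.
rewrite subr_ge0. move: Hc'. rewrite -/tR -/aR -/bR -/BR' -/mR -/rR.
by rewrite natrD natrM. Qed.
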